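(* Let $G$ be a bipartite graph with bipartition $(U,W)$, let $M$ be a perfect matching of $G$, and let $k$ be a positive integer. If $G$ is minimal $k$-extendable, then $D=D(G,M)$ is minimal $k$-strong.
   Context: All graphs are finite and simple, and all digraphs are finite with no loops and no multiple arcs. For a bipartite graph $G$ with bipartition $(U,W)$ and a perfect matching $M$, the digraph $D(G,M)$ is defined as follows. Its vertex set is $M$. For distinct edges $e=uw$ and $e'=u'w'$ of $M$ with $u,u'\in U$ and $w,w'\in W$, there is an arc from $e$ to $e'$ if and only if $uw'\in E(G)$. A digraph is strong if for any two distinct vertices $x,y$ there are directed paths from $x$ to $y$ and from $y$ to $x$. A set $S\subset V(D)$ is a separator if $D-S$ is not strong. $D$ is $k$-strong if $|V(D)|\ge k+1$ and $D$ has no separator of order less than $k$. $D$ is minimal $k$-strong if it is $k$-strong but $D-a$ is not $k$-strong for every arc $a$. A connected graph $G$ is $k$-extendable (for $k\le(|V(G)|-1)/2$) if $G$ has a matching of size $k$ and every matching of size $k$ is contained in a perfect matching of $G$. $G$ is minimal $k$-extendable if it is $k$-extendable but $G-e$ is not $k$-extendable for every edge $e\in E(G)$. *)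

(* Defs.v *)
From mathcomp Require Import all_boot.
Set Implicit Arguments. Unset Strict Implicit. Unset Printing Implicit Defensive.

(* ---------- Graphs ----------
   A finite simple graph is given by a vertex type T : finType (the vertex
   set is all of T) and an edge set E : {set {set T}} whose members are
   2-element subsets of T. *)
Section Graphs.
Variable T : finType.

Definition simple_graph (E : {set {set T}}) : Prop :=
  forall e, e \in E -> #|e| = 2.

Definition adj (E : {set {set T}}) : rel T := fun x y => [set x; y] \in E.

Definition connected_graph (E : {set {set T}}) : Prop :=
  forall x y : T, connect (adj E) x y.

Definition bipartite_with (E : {set {set T}}) (U : {set T}) : Prop :=
  forall e, e \in E -> #|e :&: U| = 1.

Definition matching (E M : {set {set T}}) : Prop :=
  M \subset E /\
  (forall e1 e2, e1 \in M -> e2 \in M -> e1 != e2 -> [disjoint e1 & e2]).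

Definition perfect_matching (E M : {set {set T}}) : Prop :=
  matching E M /\ (forall x : T, exists2 e, e \in M & x \in e).

(* k <= (|V(G)|-1)/2 is read as 2k + 1 <= |V(G)|. *)
Definition k_extendable (E : {set {set T}}) (k : nat) : Prop :=
  [/\ connected_graph E,
      k.*2.+1 <= #|T|,
      (exists M, matching E M /\ #|M| = k) &
      (forall M, matching E M -> #|M| = k ->
         exists2 P, perfect_matching E P & M \subset P)].

Definition minimal_k_extendable (E : {set {set T}}) (k : nat) : Prop :=
  k_extendable E k /\ (forall e, e \in E -> ~ k_extendable (E :\ e) k).

End Graphs.

(* ---------- Digraphs ----------
   A digraph is given by a vertex set VD : {set V} and an arc set
   AD : {set V * V} (arcs are ordered pairs; no loops/multiple arcs). *)
Section Digraphs.
Variable V : finType.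

Definition arc_rel (VD : {set V}) (AD : {set V * V}) : rel V :=
  fun x y => [&& x \in VD, y \in VD & (x, y) \in AD].

Definition strong (VD : {set V}) (AD : {set V * V}) : Prop :=
  forall x y, x \in VD -> y \in VD -> x != y ->
    connect (arc_rel VD AD) x y /\ connect (arc_rel VD AD) y x.

Definition is_separator (VD : {set V}) (AD : {set V * V}) (S : {set V}) : Prop :=
  S \subset VD /\ ~ strong (VD :\: S) AD.

Definition k_strong (VD : {set V}) (AD : {set V * V}) (k : nat) : Prop :=
  k.+1 <= #|VD| /\
  (forall S : {set V}, is_separator VD AD S -> k <= #|S|).

Definition minimal_k_strong (VD : {set V}) (AD : {set V * V}) (k : nat) : Prop :=
  k_strong VD AD k /\ (forall a, a \in AD -> ~ k_strong VD (AD :\ a) k).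

End Digraphs.

(* ---------- The digraph D(G,M) ----------
   Vertex set M; arc e -> e' (e != e' in M) iff u w' in E, where u is the
   U-end of e and w' is the W-end (W = ~: U) of e'. *)
Definition DGM_arcs (T : finType) (E : {set {set T}}) (U : {set T})
    (M : {set {set T}}) : {set {set T} * {set T}} :=
  [set p : {set T} * {set T} |
     [&& p.1 \in M, p.2 \in M, p.1 != p.2 &
         [exists u : T, exists w : T,
            [&& u \in p.1 :&: U, w \in p.2 :\: U & [set u; w] \in E]]]].

(* Main.v *)
Require Import Defs.
From Stdlib Require Import Classical.
From mathcomp Require Import all_boot zify.
Set Implicit Arguments. Unset Strict Implicit. Unset Printing Implicit Defensive.


Lemma disjP (T : finType) (A B : {set T}) :
  reflect (forall x, x \in A -> x \in B -> False) [disjoint A & B].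
Proof.
rewrite disjoints_subset; apply: (iffP subsetP) => H x.
  by move=> xA xB; move: (H x xA); rewrite inE xB.
by move=> xA; rewrite inE; apply/negP => xB; exact: H x xA xB.
Qed.

Definition pm (T : finType) (M : {set {set T}}) : Prop :=
  [/\ (forall e, e \in M -> #|e| = 2),
      (forall e1 e2, e1 \in M -> e2 \in M -> e1 != e2 -> [disjoint e1 & e2]) &
      (forall x : T, exists2 e, e \in M & x \in e)].

Lemma pm_of (T : finType) (E M : {set {set T}}) :
  simple_graph E -> perfect_matching E M -> pm M.
Proof.
move=> sE [[sME dM] cM]; split => //.
by move=> e eM; apply: sE; exact: (subsetP sME).
Qed.

Definition medge (T : finType) (M : {set {set T}}) (x : T) : {set T} :=
  odflt set0 [pick e in M | x \in e].
Definition mate (T : finType) (M : {set {set T}}) (x : T) : T :=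
  odflt x [pick y in medge M x | y != x].


Lemma medge_eq (T : finType) (M : {set {set T}}) x e :
  pm M -> e \in M -> x \in e -> medge M x = e.
Proof.
move=> [_ dM _] eM xe; rewrite /medge; case: pickP => [f /andP[fM xf]|] /=.
  apply/eqP; apply/negPn/negP => nfe.
  by move/disjP: (dM _ _ fM eM nfe) => /(_ x xf xe).
by move/(_ e); rewrite eM xe.
Qed.

Lemma medgeP (T : finType) (M : {set {set T}}) x :
  pm M -> medge M x \in M /\ x \in medge M x.
Proof.
move=> pmM; have [_ _ cM] := pmM; have [e eM xe] := cM x.
by rewrite (medge_eq pmM eM xe).
Qed.

Lemma medge_2 (T : finType) (M : {set {set T}}) x :
  pm M -> exists y, y != x /\ medge M x = [set x; y].
Proof.
move=> pmM; have [sM _ _] := pmM; have [eM xe] := medgeP x pmM.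
have /cards2P [a [b [ab eab]]] : #|medge M x| == 2 by rewrite sM.
move: xe; rewrite eab !inE => /orP[]/eqP ->.
  by exists b; rewrite eq_sym.
by exists a; split => //; rewrite setUC.
Qed.

Lemma mateP (T : finType) (M : {set {set T}}) x :
  pm M -> mate M x != x /\ medge M x = [set x; mate M x].
Proof.
move=> pmM; have [y [yx ey]] := medge_2 x pmM.
rewrite /mate; case: pickP => [z /andP[]|] /=.
  rewrite ey !inE => /orP[]/eqP -> //; by rewrite eqxx.
by move/(_ y); rewrite ey !inE eqxx orbT yx.
Qed.

Lemma mate_in (T : finType) (M : {set {set T}}) x :
  pm M -> mate M x \in medge M x.
Proof. by move=> pmM; have [_ ->] := mateP x pmM; rewrite !inE eqxx orbT. Qed.

Lemma medge_mate (T : finType) (M : {set {set T}}) x :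
  pm M -> medge M (mate M x) = medge M x.
Proof.
move=> pmM; have [eM _] := medgeP x pmM.
exact: medge_eq pmM eM (mate_in x pmM).
Qed.

Lemma mate_eq (T : finType) (M : {set {set T}}) x y :
  pm M -> y \in medge M x -> y != x -> mate M x = y.
Proof.
move=> pmM; have [mx ->] := mateP x pmM; rewrite !inE => /orP[]/eqP -> //.
by rewrite eqxx.
Qed.

Lemma mateK (T : finType) (M : {set {set T}}) x :
  pm M -> mate M (mate M x) = x.
Proof.
move=> pmM; apply: mate_eq => //.
  by rewrite medge_mate //; have [_ ->] := mateP x pmM; rewrite !inE eqxx.
by rewrite eq_sym; have [] := mateP x pmM.
Qed.

Lemma mate_inj (T : finType) (M : {set {set T}}) :
  pm M -> injective (mate M).
Proof. by move=> pmM; apply: (can_inj (g := mate M)) => x; rewrite mateK. Qed.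

Lemma mate_edge (T : finType) (M : {set {set T}}) e x y :
  pm M -> e \in M -> e = [set x; y] -> x != y -> mate M x = y.
Proof.
move=> pmM eM exy nxy; apply: mate_eq => //; last by rewrite eq_sym.
by rewrite (medge_eq (e:=e)) // exy !inE eqxx ?orbT.
Qed.


Lemma edge_sides (T : finType) (E : {set {set T}}) (U : {set T}) a b :
  simple_graph E -> bipartite_with E U -> [set a; b] \in E ->
  a != b /\ (a \in U) = (b \notin U).
Proof.
move=> sE bE eE; have h2 := sE _ eE; have h1 := bE _ eE.
rewrite cards2 in h2; have ab : a != b by case: (a != b) h2.
split => //; case aU: (a \in U); case bU: (b \in U) => //=.
  have : [set a; b] \subset [set a; b] :&: U.
    by apply/subsetP => z; rewrite !inE => /orP[]/eqP ->; rewrite eqxx ?aU ?bU ?orbT.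
  by move/subset_leq_card; rewrite h1 cards2 ab.
have : [set a; b] :&: U = set0.
  by apply/setP => z; rewrite !inE; case: eqP => [->|_]; rewrite ?aU //=; case: eqP => [->|_]; rewrite ?bU.
by move=> h; move: h1; rewrite h cards0.
Qed.

Lemma uniqU (T : finType) (E : {set {set T}}) (U : {set T}) e u u' :
  bipartite_with E U -> e \in E -> u \in e -> u' \in e -> u \in U -> u' \in U -> u = u'.
Proof.
move=> bE eE ue u'e uU u'U; have /card_le1_eqP H : #|e :&: U| <= 1 by rewrite bE.
by apply: H; rewrite inE ?ue ?u'e ?uU ?u'U.
Qed.

Lemma uniqW (T : finType) (E : {set {set T}}) (U : {set T}) e u u' :
  simple_graph E -> bipartite_with E U -> e \in E -> u \in e -> u' \in e ->
  u \notin U -> u' \notin U -> u = u'.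
Proof.
move=> sE bE eE ue u'e uU u'U.
have : #|e :\: U| <= 1 by have := cardsID U e; rewrite bE // (sE _ eE); lia.
move/card_le1_eqP => H; by apply: H; rewrite inE ?ue ?u'e ?uU ?u'U.
Qed.

Lemma mateU (T : finType) (E : {set {set T}}) (U : {set T}) (M : {set {set T}}) x :
  simple_graph E -> bipartite_with E U -> M \subset E -> pm M ->
  (mate M x \in U) = (x \notin U).
Proof.
move=> sE bE sME pmM; have [_ e2] := mateP x pmM; have [eM _] := medgeP x pmM.
have eE : [set x; mate M x] \in E by rewrite -e2 (subsetP sME).
by have [_ ->] := edge_sides sE bE eE; rewrite negbK.
Qed.


Lemma count_side (T : finType) (N : {set {set T}}) (U : {set T}) :
  (forall e1 e2, e1 \in N -> e2 \in N -> e1 != e2 -> [disjoint e1 & e2]) ->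
  (forall e, e \in N -> #|e :&: U| = 1) ->
  #|cover N :&: U| = #|N|.
Proof.
move=> dN h.
have tN : trivIset N by apply/trivIsetP => A B AN BN; exact: dN.
rewrite -sum1_card.
rewrite (eq_bigl (fun x => (x \in cover N) && (x \in U))); last by move=> x; rewrite inE.
rewrite (big_trivIset_cond _ tN) /= -sum1_card.
apply: eq_bigr => e eN; rewrite -[RHS](h e eN).
by rewrite -sum1_card; apply: eq_bigl => x; rewrite !inE.
Qed.

Lemma count_sides (T : finType) (E N : {set {set T}}) (U : {set T}) :
  simple_graph E -> bipartite_with E U -> matching E N ->
  #|cover N :&: U| = #|N| /\ #|cover N :\: U| = #|N|.
Proof.
move=> sE bE [sNE dN].
have h1 e : e \in N -> #|e :&: U| = 1 by move=> eN; apply: bE; exact: (subsetP sNE).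
split; first exact: count_side.
rewrite -(count_side (U := ~: U) dN) ?setDE //.
move=> e eN; have eE := subsetP sNE _ eN; have := cardsID U e.
by rewrite setDE h1 // (sE _ eE); lia.
Qed.


Definition NB (T : finType) (r : rel T) (S B : {set T}) :=
  [set b in B | [exists a in S, r a b]].

Lemma NB_sub (T : finType) (r : rel T) (S B : {set T}) : NB r S B \subset B.
Proof. by apply/subsetP => b; rewrite inE => /andP[]. Qed.

Lemma NBU (T : finType) (r : rel T) (S1 S2 B : {set T}) :
  NB r (S1 :|: S2) B = NB r S1 B :|: NB r S2 B.
Proof.
apply/setP => b; rewrite !inE; case: (b \in B) => //=.
apply/existsP/orP => [[a]|[]/existsP[a]]; rewrite ?inE.
  by case/andP => /orP[] aS rab; [left|right]; apply/existsP; exists a; rewrite aS.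
  by case/andP => aS rab; exists a; rewrite inE aS.
by case/andP => aS rab; exists a; rewrite inE aS orbT.
Qed.

Lemma NB_mono (T : finType) (r : rel T) (S1 S2 B : {set T}) :
  S1 \subset S2 -> NB r S1 B \subset NB r S2 B.
Proof.
move=> s12; apply/subsetP => b; rewrite !inE => /andP[-> /existsP[a /andP[aS rab]]].
by apply/existsP; exists a; rewrite (subsetP s12).
Qed.

Lemma hall (T : finType) (r : rel T) n : forall (A B : {set T}), #|A| <= n ->
  (forall S : {set T}, S \subset A -> #|S| <= #|NB r S B|) ->
  exists f : T -> T, (forall a, a \in A -> f a \in B /\ r a (f a)) /\ {in A &, injective f}.
Proof.
elim: n => [|n IH] A B hA hH.
  exists id; split => [a|a b]; first by move: hA; rewrite leqn0 => /eqP/cards0_eq ->; rewrite inE.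
  by move: hA; rewrite leqn0 => /eqP/cards0_eq ->; rewrite inE.
case: (set_0Vmem A) => [->|[a0 a0A]].
  by exists id; split => [a|a b]; rewrite inE.
case: (boolP [exists S0 : {set T}, [&& S0 \subset A, S0 != set0, S0 != A & #|NB r S0 B| <= #|S0|]]).
- case/existsP => S0 /and4P[s0A s0n s0A' hS0].
  have ltS0 : #|S0| < #|A| by rewrite proper_card // properEneq s0A' s0A.
  have [f1 [f1P f1i]] : exists f : T -> T, (forall a, a \in S0 -> f a \in NB r S0 B /\ r a (f a))
       /\ {in S0 &, injective f}.
    apply: IH; first lia.
    move=> S sS; have -> : NB r S (NB r S0 B) = NB r S B.
      apply/setP => b; rewrite !inE; case: (boolP [exists a in S, r a b]); rewrite ?andbF ?andbT //.
      case/existsP => a /andP[aS rab]; case: (b \in B) => //=.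
      by apply/existsP; exists a; rewrite (subsetP sS) ?rab.
    by apply: hH; exact: subset_trans s0A.
  have ltA1 : #|A :\: S0| < #|A|.
    rewrite cardsDS //; have : 0 < #|S0| by rewrite card_gt0.
    have : #|S0| <= #|A| by exact: subset_leq_card. lia.
  have [f2 [f2P f2i]] : exists f : T -> T, (forall a, a \in A :\: S0 -> f a \in B :\: NB r S0 B /\ r a (f a))
       /\ {in A :\: S0 &, injective f}.
    apply: IH; first lia.
    move=> S sS.
    have dS : [disjoint S & S0].
      by apply/disjP => x xS xS0; move: (subsetP sS x xS); rewrite inE xS0.
    have hU := hH (S :|: S0); rewrite NBU cardsU in hU.
    have -> : NB r S (B :\: NB r S0 B) = NB r S B :\: NB r S0 B.
      apply/setP => b; rewrite !inE; case: (b \in B); by rewrite ?andbF //= ?andbT // andbC.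
    rewrite cardsD.
    have : #|S :|: S0| = #|S| + #|S0|.
      by rewrite cardsU (disjoint_setI0 dS) cards0 subn0.
    have : S :|: S0 \subset A.
      by rewrite subUset s0A andbT; apply: subset_trans sS (subsetDl _ _).
    move/hU => h1 h2.
    have : #|NB r S B :&: NB r S0 B| <= #|NB r S0 B| by apply: subset_leq_card; exact: subsetIr.
    rewrite (disjoint_setI0 dS) cards0 cardsU in h1.
    have : #|NB r S B :&: NB r S0 B| <= #|NB r S B| by apply: subset_leq_card; exact: subsetIl.
    lia.
  exists (fun a => if a \in S0 then f1 a else f2 a); split.
    move=> a aA; case: ifP => aS0.
      by have [/(subsetP (NB_sub _ _ _)) -> ->] := f1P a aS0.
    have [] := f2P a; first by rewrite inE aS0 aA.
    by rewrite inE => /andP[_ ->] ->.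
  move=> a b aA bA /=; case: ifP => aS0; case: ifP => bS0.
  + exact: f1i.
  + move=> e; have [h1 _] := f1P a aS0; have [] := f2P b; first by rewrite inE bS0 bA.
    by rewrite -e inE h1.
  + move=> e; have [h1 _] := f1P b bS0; have [] := f2P a; first by rewrite inE aS0 aA.
    by rewrite e inE h1.
  + by apply: f2i; rewrite inE ?aS0 ?bS0.
- move=> hno.
  have h1 : 0 < #|NB r [set a0] B|.
    have := hH [set a0]; rewrite sub1set a0A cards1 => /(_ isT); lia.
  have [b0 b0N] : exists b0, b0 \in NB r [set a0] B.
    by apply/set0Pn; rewrite -card_gt0.
  have ra0b0 : r a0 b0.
    by move: b0N; rewrite inE => /andP[_ /existsP[a /andP[]]]; rewrite inE => /eqP ->.
  have b0B : b0 \in B by move: b0N; rewrite inE => /andP[].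
  have [f1 [f1P f1i]] : exists f : T -> T, (forall a, a \in A :\ a0 -> f a \in B :\ b0 /\ r a (f a))
       /\ {in A :\ a0 &, injective f}.
    apply: IH; first by move: hA; rewrite (cardsD1 a0 A) a0A; lia.
    move=> S sS; case: (set_0Vmem S) => [->|[s sS']]; first by rewrite cards0.
    have sA : S \subset A by apply: subset_trans sS (subsetDl _ _).
    have : ~~ [&& S \subset A, S != set0, S != A & #|NB r S B| <= #|S|].
      by apply: contra hno => H; apply/existsP; exists S.
    rewrite sA /= (_ : S != set0); last by apply/set0Pn; exists s.
    rewrite (_ : S != A) /=; last first.
      by apply/eqP => eSA; move: (subsetP sS a0); rewrite eSA a0A !inE eqxx => /(_ isT).
    rewrite -ltnNge => hS.
    have -> : NB r S (B :\ b0) = NB r S B :\ b0.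
      by apply/setP => b; rewrite !inE; case: (b != b0).
    have := cardsD1 b0 (NB r S B); case: (b0 \in NB r S B) => /=; lia.
  exists (fun a => if a == a0 then b0 else f1 a); split.
    move=> a aA; case: eqP => [->|/eqP na]; first by rewrite b0B.
    by have [] := f1P a; [rewrite !inE na aA| rewrite inE => /andP[_ ->] ->].
  move=> a b aA bA /=; case: eqP => [->|/eqP na]; case: eqP => [->|/eqP nb] //.
  + move=> e; have [] := f1P b; first by rewrite !inE nb bA.
    by rewrite -e !inE eqxx.
  + move=> e; have [] := f1P a; first by rewrite !inE na aA.
    by rewrite e !inE eqxx.
  + by apply: f1i; rewrite !inE ?na ?nb.
Qed.


Lemma extend_set (T : finType) (A C : {set T}) n :
  A \subset C -> #|A| <= n -> n <= #|C| ->
  exists B : {set T}, [/\ A \subset B, B \subset C & #|B| = n].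
Proof.
move=> AC; elim: n => [|n IH] hA hC.
  by exists A; move: hA; rewrite leqn0 => /eqP hA; split.
case: (ltngtP #|A| n.+1) => [lt|gt|eq]; last by exists A.
  have [B [AB BC cB]] := IH lt (ltnW hC).
  have : B \proper C by rewrite properEcard BC cB.
  case/properP => _ [x xC xB]; exists (x |: B); split.
  + by apply: subset_trans AB (subsetUr _ _).
  + by rewrite subUset sub1set xC.
  + by rewrite cardsU1 xB cB.
by move: hA; rewrite leqNgt gt.
Qed.

Lemma conn_inv (T : finType) (r : rel T) (P : pred T) x y :
  (forall a b, r a b -> P a -> P b) -> connect r x y -> P x -> P y.
Proof.
move=> h /connectP [p]; elim: p x => [|z p IHp] x /=; first by move=> _ ->.
by case/andP => rxz pz ey Px; apply: IHp pz ey _; exact: h rxz Px.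
Qed.

Lemma conn_cross (T : finType) (r : rel T) (P : pred T) x y :
  connect r x y -> P x -> ~~ P y -> exists a b, [/\ r a b, P a & ~~ P b].
Proof.
move=> cxy Px nPy; apply: NNPP => hn; move/negP: nPy; apply.
apply: conn_inv cxy Px => a b rab Pa; apply/negPn/negP => nPb; apply: hn.
by exists a, b.
Qed.

Lemma conn_map (T : finType) (r1 r2 : rel T) x y :
  (forall a b, r1 a b -> connect r2 a b) -> connect r1 x y -> connect r2 x y.
Proof.
move=> h /connectP [p]; elim: p x => [|z p IHp] x /=; first by move=> _ ->.
by case/andP => rxz pz ey; apply: connect_trans (h _ _ rxz) (IHp _ pz ey).
Qed.


Definition setting (T : finType) (E : {set {set T}}) (U : {set T}) (M : {set {set T}}) :=
  [/\ simple_graph E, bipartite_with E U & perfect_matching E M].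

Lemma set_pm T E U M : @setting T E U M -> pm M.
Proof. by case=> sE _ pM; exact: pm_of pM. Qed.

Lemma set_sub T E U M : @setting T E U M -> M \subset E.
Proof. by case=> _ _ [[]]. Qed.

Lemma medge_U_inj T E U M u v : @setting T E U M -> u \in U -> v \in U ->
  medge M u = medge M v -> u = v.
Proof.
move=> st uU vU euv; have pmM := set_pm st; have [eM ue] := medgeP u pmM.
have [_ ve] := medgeP v pmM.
have [_ bE _] := st; apply: (uniqU bE (subsetP (set_sub st) _ eM)) => //.
by rewrite euv.
Qed.

Lemma uend T E U M e : @setting T E U M -> e \in M -> exists u, u \in U /\ medge M u = e.
Proof.
move=> st eM; have pmM := set_pm st; have [_ _ cM] := pmM.
have [sE bE _] := st.
have /card_gt0P [u] : 0 < #|e :&: U| by rewrite bE // (subsetP (set_sub st)).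
by rewrite inE => /andP[ue uU]; exists u; rewrite (medge_eq pmM eM ue).
Qed.

Lemma arc_to_edge T E U M e1 e2 : @setting T E U M ->
  (e1, e2) \in DGM_arcs E U M ->
  exists u w, [/\ u \in U, w \notin U, [set u; w] \in E, medge M u = e1 & medge M w = e2]
    /\ [/\ e1 != e2, e1 \in M & e2 \in M].
Proof.
move=> st; have pmM := set_pm st.
rewrite inE /= => /and4P [e1M e2M ne /existsP [u /existsP [w /and3P [ue we uwE]]]].
move: ue we; rewrite !inE => /andP[ue1 uU] /andP[wU we2].
exists u, w; split; split => //; exact: medge_eq.
Qed.

Lemma arc_of_edge T E U M u w : @setting T E U M ->
  u \in U -> w \notin U -> [set u; w] \in E -> medge M u != medge M w ->
  (medge M u, medge M w) \in DGM_arcs E U M.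
Proof.
move=> st uU wU uwE ne; have pmM := set_pm st.
have [e1M ue1] := medgeP u pmM; have [e2M we2] := medgeP w pmM.
rewrite inE /= e1M e2M ne /=; apply/existsP; exists u; apply/existsP; exists w.
by rewrite !inE ue1 uU we2 wU uwE.
Qed.

Definition tau (T : finType) (M P : {set {set T}}) (v : T) := mate M (mate P v).

Lemma tau_inj T E U M P : @setting T E U M -> pm P -> injective (tau M P).
Proof.
move=> st pmP x y; rewrite /tau => /(mate_inj (set_pm st)); exact: mate_inj.
Qed.

Lemma tau_U T E U M P v : @setting T E U M -> pm P -> P \subset E ->
  v \in U -> tau M P v \in U.
Proof.
move=> st pmP sPE vU; have [sE bE _] := st.
by rewrite /tau (mateU _ sE bE (set_sub st) (set_pm st)) (mateU _ sE bE sPE pmP) vU.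
Qed.

Lemma tau_fix T E U M P v : @setting T E U M -> pm P -> medge M v \in P -> tau M P v = v.
Proof.
move=> st pmP eP; have pmM := set_pm st; have [_ vin] := medgeP v pmM.
have h : medge P v = medge M v by apply: medge_eq.
have h2 : mate P v = mate M v by rewrite /mate h.
by rewrite /tau h2 mateK.
Qed.

Lemma tau_arc T E U M P v : @setting T E U M -> pm P -> P \subset E ->
  v \in U -> tau M P v != v ->
  (medge M v, medge M (tau M P v)) \in DGM_arcs E U M.
Proof.
move=> st pmP sPE vU ne; have pmM := set_pm st; have [sE bE _] := st.
have e1 : medge M (tau M P v) = medge M (mate P v) by rewrite /tau medge_mate.
rewrite e1; apply: arc_of_edge => //.
- by rewrite (mateU _ sE bE sPE pmP) vU.
- have [_ <-] := mateP v pmP; have [] := medgeP v pmP; by move=> /(subsetP sPE).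
- rewrite -e1; apply/eqP => h; move/eqP: ne; apply.
  symmetry; exact: (medge_U_inj st vU (tau_U st pmP sPE vU) h).
Qed.

Lemma tau_edge T E U M P u w : @setting T E U M -> pm P ->
  [set u; w] \in P -> u != w -> tau M P u = mate M w.
Proof.
by move=> st pmP uwP ne; rewrite /tau (mate_edge pmP uwP erefl ne).
Qed.


Lemma matching_add T (E N : {set {set T}}) e :
  matching E N -> e \in E -> (forall f, f \in N -> [disjoint e & f]) ->
  matching E (e |: N).
Proof.
move=> [sNE dN] eE de; split.
  by rewrite subUset sub1set eE.
move=> e1 e2; rewrite !inE => /orP[/eqP->|h1] /orP[/eqP->|h2]; rewrite ?eqxx //.
- by move=> _; apply: de.
- by move=> _; rewrite disjoint_sym; apply: de.
- exact: dN.
Qed.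

Lemma matching_sub T (E N M : {set {set T}}) :
  matching E M -> N \subset M -> matching E N.
Proof.
move=> [sME dM] sNM; split; first exact: subset_trans sNM sME.
by move=> e1 e2 h1 h2; apply: dM; apply: (subsetP sNM).
Qed.

Lemma edge_disj T E U M u w b : @setting T E U M -> b \in M ->
  b != medge M u -> b != medge M w -> [disjoint [set u; w] & b].
Proof.
move=> st bM nu nw; have pmM := set_pm st; apply/disjP => x.
rewrite !inE => /orP[]/eqP -> xb.
  by move/eqP: nu; apply; symmetry; exact: medge_eq.
by move/eqP: nw; apply; symmetry; exact: medge_eq.
Qed.

Lemma edge_notin T E U M u w : @setting T E U M -> medge M u != medge M w ->
  [set u; w] \notin M.
Proof.
move=> st ne; apply/negP => h; have pmM := set_pm st; move/eqP: ne; apply.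
by rewrite (medge_eq pmM h (x:=u)) ?(medge_eq pmM h (x:=w)) // !inE eqxx ?orbT.
Qed.

Lemma st_matching T E U M : @setting T E U M -> matching E M.
Proof. by case=> _ _ []. Qed.

Lemma case1_false T E U M k (S R : {set {set T}}) q r :
  @setting T E U M -> k_extendable E k -> k < #|M| -> S \subset M -> #|S| < k ->
  (forall e1 e2, e1 \in R -> e2 \in M :\: S -> (e1, e2) \in DGM_arcs E U M -> e2 \in R) ->
  R \subset M :\: S -> q \in M :\: S -> q \notin R -> r \in R ->
  (q, r) \in DGM_arcs E U M -> False.
Proof.
move=> st kE kM SM Sk Rcl RS qS qR rR hqr.
have pmM := set_pm st; have [sE bE pM] := st.
have [u [w [[uU wU uwE mu mw] [ne qM rM]]]] := arc_to_edge st hqr.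
have rS := subsetP RS _ rR.
have h1 : S \subset M :\: [set q; r].
  apply/subsetP => s sS; rewrite !inE (subsetP SM) // andbT.
  apply/negP => /orP[]/eqP es; subst s.
    by move: qS; rewrite inE sS.
  by move: rS; rewrite inE sS.
have h3 : k.-1 <= #|M :\: [set q; r]|.
  rewrite cardsD; have : #|M :&: [set q; r]| <= 2.
    by apply: leq_trans (subset_leq_card (subsetIr _ _)) _; rewrite cards2; case: (q != r).
  move: kM; clear; move=> kM h; lia.
have h2 : #|S| <= k.-1 by move: Sk; clear; lia.
have [B [SB BC cB]] := extend_set h1 h2 h3.
have BM : B \subset M by apply: subset_trans BC (subsetDl _ _).
have uwnM : [set u; w] \notin M by apply: (edge_notin st); rewrite mu mw.
have mF : matching E ([set u; w] |: B).
  apply: matching_add => //; first exact: matching_sub (st_matching st) BM.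
  move=> b bB; apply: edge_disj st (subsetP BM _ bB) _ _; move: (subsetP BC _ bB);
  by rewrite !inE ?mu ?mw => /andP[/norP[]].
have cF : #|[set u; w] |: B| = k.
  rewrite cardsU1 cB; have -> : ([set u; w] \notin B) by apply: contra uwnM; exact: (subsetP BM).
  by move: Sk; clear; lia.
have [_ _ _ kext] := kE.
have [P pmE FP] := kext _ mF cF.
have pmP := pm_of sE pmE; have sPE : P \subset E by case: pmE => [[]].
have uw : u != w by apply/eqP => e; move: uU; rewrite e (negbTE wU).
have tu : tau M P u = mate M w.
  by apply: tau_edge st pmP _ uw; apply: (subsetP FP); rewrite !inE eqxx.
pose Inv := fun v => (v \in U) && (medge M v \in R).
have cur : fconnect (tau M P) (mate M w) u.
  by rewrite fconnect_sym; [apply: connect1; rewrite /= tu|exact: tau_inj st pmP].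
have : Inv u.
  apply: (conn_inv _ cur); last first.
    by rewrite /Inv (mateU _ sE bE (set_sub st) pmM) wU medge_mate // mw rR.
  move=> a b /eqP <- /andP[aU aR]; rewrite /Inv (tau_U st pmP sPE aU) /=.
  case: (eqVneq (tau M P a) a) => [->//|na].
  have arc := tau_arc st pmP sPE aU na.
  have [? [? [_ [_ _ bM]]]] := arc_to_edge st arc.
  apply: (Rcl _ _ aR _ arc); rewrite inE bM andbT; apply/negP => bS.
  move/eqP: na; apply; apply: (tau_inj st pmP); apply: tau_fix st pmP _.
  by apply: (subsetP FP); rewrite inE (subsetP SB _ bS) orbT.
by rewrite /Inv mu (negbTE qR) andbF.
Qed.

Lemma case2_false T E U M k (S R : {set {set T}}) q r z :
  @setting T E U M -> k_extendable E k -> k < #|M| -> S \subset M -> #|S| < k ->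
  (forall e1 e2, e1 \in R -> e2 \in M :\: S -> (e1, e2) \in DGM_arcs E U M -> e2 \in R) ->
  R \subset M :\: S -> q \in M :\: S -> q \notin R -> r \in R -> z \in S ->
  (q, z) \in DGM_arcs E U M -> (z, r) \in DGM_arcs E U M -> False.
Proof.
move=> st kE kM SM Sk Rcl RS qS qR rR zS hqz hzr.
have pmM := set_pm st; have [sE bE pM] := st.
have [uq [wz [[uqU wzU e1E muq mwz] [ne1 qM zM]]]] := arc_to_edge st hqz.
have [uz [wr [[uzU wrU e2E muz mwr] [ne2 _ rM]]]] := arc_to_edge st hzr.
have rS := subsetP RS _ rR.
have qz : q != z by apply/eqP => e; move: qS; rewrite e inE zS.
have rz : r != z by apply/eqP => e; move: rS; rewrite e inE zS.
have h1 : S :\ z \subset M :\: [set q; r; z].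
  apply/subsetP => s; rewrite !inE => /andP[sz sS]; rewrite (subsetP SM) // andbT (negbTE sz) orbF.
  apply/negP => /orP[]/eqP es; subst s.
    by move: qS; rewrite inE sS.
  by move: rS; rewrite inE sS.
have h3 : k.-2 <= #|M :\: [set q; r; z]|.
  rewrite cardsD; have : #|M :&: [set q; r; z]| <= 3.
    apply: leq_trans (subset_leq_card (subsetIr _ _)) _.
    rewrite -setUA cardsU1 cards2; by case: (q \in _); case: (r != z).
  by move: kM; clear; lia.
have h2 : #|S :\ z| <= k.-2 by move: Sk; rewrite (cardsD1 z S) zS; clear; lia.
have [B [SB BC cB]] := extend_set h1 h2 h3.
have BM : B \subset M by apply: subset_trans BC (subsetDl _ _).
have e2nM : [set uz; wr] \notin M by apply: (edge_notin st); rewrite muz mwr eq_sym.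
have e1nM : [set uq; wz] \notin M by apply: (edge_notin st); rewrite muq mwz.
have mF1 : matching E ([set uz; wr] |: B).
  apply: matching_add => //; first exact: matching_sub (st_matching st) BM.
  move=> b bB; apply: edge_disj st (subsetP BM _ bB) _ _; move: (subsetP BC _ bB);
  by rewrite !inE ?muz ?mwr => /andP[H _]; apply/eqP => e; move: H; rewrite e eqxx ?orbT.
have uquz : uq != uz by apply/eqP => e; move/eqP: qz; apply; rewrite -muq -muz e.
have mF : matching E ([set uq; wz] |: ([set uz; wr] |: B)).
  apply: matching_add => // f; rewrite !inE => /orP[/eqP ->|fB].
    apply/disjP => x; rewrite !inE => /orP[]/eqP -> /orP[]/eqP e.
    + by move/eqP: uquz.
    + by move: wrU; rewrite -e uqU.
    + by move: uzU; rewrite -e (negbTE wzU).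
    + by move/eqP: rz; apply; rewrite -mwr -mwz e.
  apply: edge_disj st (subsetP BM _ fB) _ _; move: (subsetP BC _ fB);
  by rewrite !inE ?muq ?mwz => /andP[H _]; apply/eqP => e; move: H; rewrite e eqxx ?orbT.
have cF : #|[set uq; wz] |: ([set uz; wr] |: B)| = k.
  rewrite cardsU1 cardsU1 cB.
  have -> : ([set uz; wr] \notin B) by apply: contra e2nM; exact: (subsetP BM).
  have -> : ([set uq; wz] \notin [set uz; wr] |: B).
    rewrite !inE negb_or; apply/andP; split; last by apply: contra e1nM; exact: (subsetP BM).
    apply/negP => /eqP e; have : uq \in [set uz; wr] by rewrite -e !inE eqxx.
    rewrite !inE (negbTE uquz) /= => /eqP ew; by move: wrU; rewrite -ew uqU.
  have : 0 < #|S| by apply/card_gt0P; exists z.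
  by move: Sk; clear; lia.
have [_ _ _ kext] := kE.
have [P pmE FP] := kext _ mF cF.
have pmP := pm_of sE pmE; have sPE : P \subset E by case: pmE => [[]].
have uwq : uq != wz by apply/eqP => e; move: uqU; rewrite e (negbTE wzU).
have uwz : uz != wr by apply/eqP => e; move: uzU; rewrite e (negbTE wrU).
have tq : tau M P uq = uz.
  rewrite (tau_edge st pmP _ uwq); last by apply: (subsetP FP); rewrite !inE eqxx.
  apply: (medge_U_inj st) => //; first by rewrite (mateU _ sE bE (set_sub st) pmM) wzU.
  by rewrite medge_mate // mwz.
have tz : tau M P uz = mate M wr.
  by apply: tau_edge st pmP _ uwz; apply: (subsetP FP); rewrite !inE eqxx orbT.
pose Inv := fun v => (v \in U) && ((v == uz) || (medge M v \in R)).
have cur : fconnect (tau M P) (mate M wr) uq.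
  rewrite fconnect_sym; last exact: tau_inj st pmP.
  apply: (connect_trans (y := uz)); apply: connect1; by rewrite /= ?tq ?tz.
have murR : medge M (mate M wr) \in R by rewrite medge_mate // mwr.
have : Inv uq.
  apply: (conn_inv _ cur); last first.
    by rewrite /Inv (mateU _ sE bE (set_sub st) pmM) wrU murR orbT.
  move=> a b /eqP <- /andP[aU aR]; rewrite /Inv (tau_U st pmP sPE aU) /=.
  case: (eqVneq a uz) aR => [->|az] /= aR; first by rewrite tz murR orbT.
  case: (eqVneq (tau M P a) a) => [->|na]; first by rewrite aR orbT.
  case: (eqVneq (tau M P a) uz) => [//|tna] /=.
  have arc := tau_arc st pmP sPE aU na.
  have [? [? [_ [_ _ bM]]]] := arc_to_edge st arc.
  apply: (Rcl _ _ aR _ arc); rewrite inE bM andbT; apply/negP => bS.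
  case: (eqVneq (medge M (tau M P a)) z) => [ez|nz].
    move/eqP: tna; apply; apply: (medge_U_inj st (tau_U st pmP sPE aU) uzU).
    by rewrite ez muz.
  move/eqP: na; apply; apply: (tau_inj st pmP); apply: tau_fix st pmP _.
  by apply: (subsetP FP); rewrite !inE (subsetP SB) ?orbT // !inE nz bS.
by rewrite /Inv /= muq (negbTE qR) (negbTE uquz) andbF.
Qed.


Lemma card_sides T E U M : @setting T E U M -> #|U| = #|M| /\ #|~: U| = #|M|.
Proof.
move=> st; have [sE bE pM] := st; have pmM := set_pm st.
have cM : cover M = setT.
  apply/setP => x; rewrite inE; have [_ _ cv] := pmM; have [e eM xe] := cv x.
  by apply/bigcupP; exists e.
have [h1 h2] := count_sides sE bE (st_matching st).
by rewrite cM setTI in h1; rewrite cM setTD in h2.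
Qed.

Lemma card_T T E U M : @setting T E U M -> #|T| = #|M|.*2.
Proof.
move=> st; have [h1 h2] := card_sides st; rewrite -(cardsC U) h1 h2 -addnn //.
Qed.

Lemma sep_false T E U M k (S : {set {set T}}) :
  @setting T E U M -> k_extendable E k -> k < #|M| -> S \subset M -> #|S| < k ->
  ~ strong (M :\: S) (DGM_arcs E U M) ->
  (forall z, z \in S -> strong (M :\: (S :\ z)) (DGM_arcs E U M)) -> False.
Proof.
move=> st kE kM SM Sk nst hmin.
have pmM := set_pm st; have [sE bE pM] := st.
set A := DGM_arcs E U M.
set Dr := arc_rel (M :\: S) A.
case: (classic (exists x y, [/\ x \in M :\: S, y \in M :\: S & ~~ connect Dr x y])); last first.
  move=> H; apply: nst => x y xS yS _; split; apply/negPn/negP => nc; apply: H.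
    by exists x, y.
  by exists y, x.
move=> [x [y [xS yS nc]]].
set R := [set v | connect Dr x v].
have RS : R \subset M :\: S.
  apply/subsetP => v; rewrite inE => cv; apply: (conn_inv _ cv) => // a b.
  by rewrite /Dr /arc_rel => /and3P[].
have Rcl : forall e1 e2, e1 \in R -> e2 \in M :\: S -> (e1, e2) \in A -> e2 \in R.
  move=> e1 e2 c1 e2S a12; have e1S := subsetP RS e1 c1.
  rewrite inE in c1; rewrite inE; apply: connect_trans c1 (connect1 _).
  by rewrite /Dr /arc_rel e1S e2S.
have xR : x \in R by rewrite inE connect0.
have yR : y \notin R by rewrite inE.
case: (classic (exists q r, [/\ q \in M :\: S, q \notin R, r \in R & (q, r) \in A])).
  by move=> [q [r [qS qR rR qr]]]; exact: case1_false st kE kM SM Sk Rcl RS qS qR rR qr.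
move=> noarc.
have xy : x != y by apply/eqP => e; move: yR; rewrite -e xR.
case: (set_0Vmem S) => [S0|[z zS]].
- have [cG _ _ _] := kE.
  have [x0 [_ mx0]] := uend st (subsetP (subsetDl M S) _ xS).
  have [y0 [_ my0]] := uend st (subsetP (subsetDl M S) _ yS).
  have hx0 : medge M x0 \in R by rewrite mx0.
  have hy0 : ~~ (medge M y0 \in R) by rewrite my0.
  have [a [b [ab Pa Pb]]] := conn_cross (P := fun v => medge M v \in R) (cG x0 y0) hx0 hy0.
  have abE : [set a; b] \in E by exact: ab.
  have [nab sab] := edge_sides sE bE abE.
  have nmab : medge M a != medge M b by apply/eqP => e; move: Pb; rewrite -e Pa.
  have inMS v : medge M v \in M :\: S by rewrite S0 setD0; case: (medgeP v pmM).
  case aU: (a \in U).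
    have bU : b \notin U by rewrite -sab.
    have := Rcl _ _ Pa (inMS b) (arc_of_edge st aU bU abE nmab); by rewrite (negbTE Pb).
  have bU : b \in U by apply/negPn; rewrite -sab aU.
  apply: noarc; exists (medge M b), (medge M a); split => //.
  apply: arc_of_edge st bU (negbT aU) _ _; first by rewrite setUC.
  by rewrite eq_sym.
- have st' := hmin z zS.
  have inD v : v \in M :\: S -> v \in M :\: (S :\ z).
    by rewrite !inE => /andP[vS ->]; rewrite andbT negb_and vS orbT.
  have [_ cyx] := st' x y (inD _ xS) (inD _ yS) xy.
  have zMS : z \notin M :\: S by rewrite inE zS.
  have hxR : ~~ (x \notin R) by rewrite xR.
  have [a [b [ab Pa Pb]]] := conn_cross (P := fun v => v \notin R) cyx yR hxR.
  move: ab; rewrite /arc_rel => /and3P[aD bD abA].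
  have [az|anz] := eqVneq a z; last first.
    exfalso; apply: noarc; exists a, b; split => //; last by apply/negPn.
    by move: aD; rewrite !inE negb_and negbK (negbTE anz) /= => /andP[-> ->].
  subst a.
  have hy1 : ~~ ((y \in R) || (y == z)).
    by rewrite negb_or yR /=; apply/eqP => e; move: yS; rewrite e inE zS.
  have hx1 : ~~ ~~ ((x \in R) || (x == z)) by rewrite xR.
  have [a' [b' [ab' Pa' Pb']]] := conn_cross (P := fun v => ~~ ((v \in R) || (v == z))) cyx hy1 hx1.
  move: ab'; rewrite /arc_rel => /and3P[aD' bD' abA'].
  move: Pa' Pb'; rewrite negb_or negbK => /andP[a'R a'z] /orP[b'R|/eqP b'z].
    exfalso; apply: noarc; exists a', b'; split => //.
    by move: aD'; rewrite !inE negb_and negbK (negbTE a'z) /= => /andP[-> ->].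
  subst b'.
  apply: (case2_false st kE kM SM Sk Rcl RS _ a'R (negbNE Pb) zS abA' abA).
  by move: aD'; rewrite !inE negb_and negbK (negbTE a'z) /= => /andP[-> ->].
Qed.

Lemma dir1 T E U M k : @setting T E U M -> 0 < k -> k_extendable E k ->
  k_strong M (DGM_arcs E U M) k.
Proof.
move=> st k0 kE.
have kM : k < #|M|.
  have [_ hT _ _] := kE; move: hT; rewrite (card_T st); clear; lia.
split => //.
suff H : forall n (S : {set {set T}}), #|S| <= n -> is_separator M (DGM_arcs E U M) S -> k <= #|S|.
  by move=> S; exact: H _ S (leqnn _).
elim=> [|n IH] S hS [SM nst]; case: (leqP k #|S|) => // Sk; exfalso.
  apply: (sep_false st kE kM SM Sk nst) => z zS.
  by move: hS; rewrite leqn0 => /eqP/cards0_eq S0; move: zS; rewrite S0 inE.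
apply: (sep_false st kE kM SM Sk nst) => z zS.
case: (classic (strong (M :\: (S :\ z)) (DGM_arcs E U M))) => // ns.
have : k <= #|S :\ z|.
  apply: IH; last by split => //; apply: subset_trans (subsetDl _ _) SM.
  by move: hS; rewrite (cardsD1 z S) zS; clear; lia.
by move: Sk; rewrite (cardsD1 z S) zS; clear; lia.
Qed.


Lemma hall_cond T E U M k (F : {set {set T}}) (S : {set T}) :
  @setting T E U M -> 0 < k -> k_strong M (DGM_arcs E U M) k -> matching E F -> #|F| = k ->
  S \subset U :\: cover F ->
  #|S| <= #|NB (adj E) S (~: U :\: cover F)|.
Proof.
move=> st k0 [kM ks] mF cF SA.
have pmM := set_pm st; have [sE bE pM] := st.
have [cFU cFW] := count_sides sE bE mF.
have [cU cW] := card_sides st.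
case: (set_0Vmem S) => [->|[s0 s0S]]; first by rewrite cards0.
have SU : S \subset U by apply: subset_trans SA (subsetDl _ _).
set VF := cover F.
set N := NB (adj E) S (~: U).
have -> : NB (adj E) S (~: U :\: VF) = N :\: VF.
  by apply/setP => b; rewrite !inE; case: (b \in VF); rewrite ?andbF ?andbT.
have NW : N \subset ~: U by exact: NB_sub.
have hNV : #|N :&: VF| <= k.
  rewrite -cF -cFW; apply: subset_leq_card; apply/subsetP => x /setIP [xN xV]; rewrite inE xV andbT.
  by move: (subsetP NW x xN); rewrite inE.
rewrite cardsD.
suff : #|S| + k <= #|N| by move: hNV; clear; lia.
rewrite leqNgt; apply/negP => hlt.
set mS := mate M @: S.
have mSN : mS \subset N.
  apply/subsetP => w /imsetP [s sS ->]; rewrite !inE.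
  rewrite (mateU _ sE bE (set_sub st) pmM) (subsetP SU) //=.
  apply/existsP; exists s; rewrite sS /adj.
  have [_ <-] := mateP s pmM; have [eM _] := medgeP s pmM; exact: (subsetP (set_sub st)).
have cmS : #|mS| = #|S| by rewrite card_imset //; exact: mate_inj.
set N' := N :\: mS.
have cN' : #|N'| < k.
  rewrite /N' (cardsDS mSN) cmS; move: hlt k0; clear; lia.
set O := medge M @: N'.
have cO : #|O| < k by apply: leq_ltn_trans (leq_imset_card _ _) cN'.
set X := medge M @: S.
have OM : O \subset M by apply/subsetP => e /imsetP [w _ ->]; case: (medgeP w pmM).
have XO : forall e, e \in X -> e \in O -> False.
  move=> e /imsetP [s sS ->] /imsetP [w wN' ew].
  move: wN'; rewrite !inE => /andP [wmS /andP[wW _]].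
  have wm : w \in medge M s by rewrite ew; case: (medgeP w pmM).
  have sw : w != s by apply/eqP => e'; move: wW; rewrite e' (subsetP SU).
  move: wmS; rewrite (_ : w = mate M s) ?(imset_f _ sS) //.
  by symmetry; apply: mate_eq.
have cl : forall e1 e2, e1 \in X -> e2 \in M :\: O -> (e1, e2) \in DGM_arcs E U M -> e2 \in X.
  move=> e1 e2 /imsetP [s sS ->] e2O arc.
  have [u [w [[uU wU uwE mu mw] _]]] := arc_to_edge st arc.
  have us : u = s by apply: (medge_U_inj st) => //; exact: (subsetP SU).
  subst u.
  have wN : w \in N by rewrite !inE wU /=; apply/existsP; exists s; rewrite sS.
  case: (boolP (w \in mS)) => [/imsetP [s' s'S ws']|wmS].
    by rewrite -mw ws' medge_mate //; exact: imset_f.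
  by move: e2O; rewrite inE -mw (imset_f _ (_ : w \in N')) // inE wmS wN.
have cX : #|X| <= #|M| - k.
  apply: leq_trans (leq_imset_card _ _) _.
  apply: leq_trans (subset_leq_card SA) _.
  rewrite cardsD cU setIC cFU cF; clear; lia.
have [y yM yXO] : exists2 y, y \in M & y \notin X :|: O.
  apply/subsetPn; apply/negP => sub; idtac.
  have hlt2 : #|X :|: O| < #|M|.
    by apply: leq_ltn_trans (leq_card_setU X O).1 _; move: cX cO kM; clear; lia.
  by move: (subset_leq_card sub); rewrite leqNgt hlt2.
have xX : medge M s0 \in X by exact: imset_f.
have : k <= #|O|.
  apply: ks; split => // hst.
  have xMO : medge M s0 \in M :\: O.
    rewrite inE; case: (medgeP s0 pmM) => -> _; rewrite andbT.
    by apply/negP => h; exact: XO _ xX h.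
  have yMO : y \in M :\: O by move: yXO; rewrite !inE negb_or yM => /andP[_ ->].
  have xy : medge M s0 != y by apply/eqP => e; move: yXO; rewrite -e inE xX.
  have [cxy _] := hst _ _ xMO yMO xy.
  have : y \in X.
    apply: (conn_inv _ cxy xX) => a b; rewrite /arc_rel => /and3P [_ bMO ab] aX.
    exact: cl aX bMO ab.
  by move: yXO; rewrite inE => /norP[/negbTE ->].
by move: cO; clear; lia.
Qed.


Lemma conn_medge T E U M a c : @setting T E U M -> medge M a = medge M c ->
  connect (adj E) a c.
Proof.
move=> st eac; have pmM := set_pm st.
have [_ ec] := medgeP c pmM; rewrite -eac in ec.
have [_ e2] := mateP a pmM; move: ec; rewrite e2 !inE => /orP[]/eqP ->.
  exact: connect0.
apply: connect1; rewrite /adj -e2; have [eM _] := medgeP a pmM.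
exact: (subsetP (set_sub st)).
Qed.

Lemma st_strong T E U M k : @setting T E U M -> 0 < k ->
  k_strong M (DGM_arcs E U M) k -> strong M (DGM_arcs E U M).
Proof.
move=> st k0 [_ ks]; case: (classic (strong M (DGM_arcs E U M))) => // ns.
have : k <= #|(set0 : {set {set T}})|.
  by apply: ks; split; [exact: sub0set | rewrite setD0].
by rewrite cards0 leqNgt k0.
Qed.

Lemma st_conn T E U M k : @setting T E U M -> 0 < k ->
  k_strong M (DGM_arcs E U M) k -> connected_graph E.
Proof.
move=> st k0 ks x y; have hs := st_strong st k0 ks; have pmM := set_pm st.
case: (eqVneq (medge M x) (medge M y)) => [e|ne]; first exact: (conn_medge st e).
have [xM _] := medgeP x pmM; have [yM _] := medgeP y pmM.
have [cxy _] := hs _ _ xM yM ne.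
pose P := fun e => [forall a, (medge M a == e) ==> connect (adj E) x a].
have : P (medge M y).
  apply: (conn_inv _ cxy).
    move=> e1 e2; rewrite /arc_rel => /and3P [_ _ arc] /forallP Pe1.
    have [u [w [[uU wU uwE mu mw] _]]] := arc_to_edge st arc.
    apply/forallP => a; apply/implyP => /eqP ma.
    have cxu : connect (adj E) x u by move/implyP: (Pe1 u); apply; rewrite mu.
    have auw : adj E u w by exact: uwE.
    have cwa : connect (adj E) w a by apply: (conn_medge st); rewrite mw ma.
    exact: connect_trans cxu (connect_trans (connect1 auw) cwa).
  by apply/forallP => a; apply/implyP => /eqP ma; apply: (conn_medge st); rewrite ma.
by move/forallP/(_ y)/implyP; apply.
Qed.

Lemma dir2 T E U M k : @setting T E U M -> 0 < k ->
  k_strong M (DGM_arcs E U M) k -> k_extendable E k.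
Proof.
move=> st k0 ks; have pmM := set_pm st; have [sE bE pM] := st.
have kM := ks.1.
have [cU cW] := card_sides st.
split.
- exact: st_conn st k0 ks.
- by rewrite (card_T st); move: kM; clear; lia.
- have h0 : #|(set0 : {set {set T}})| <= k by rewrite cards0.
  have [B [_ BM cB]] := extend_set (sub0set M) h0 (ltnW kM).
  by exists B; split => //; exact: matching_sub (st_matching st) BM.
move=> F mF cF.
have [cFU cFW] := count_sides sE bE mF.
set VF := cover F.
set A := U :\: VF.
set B := ~: U :\: VF.
have [f [fP finj]] := hall (r := adj E) (n := #|A|) (B := B) (leqnn _)
   (fun S SA => hall_cond st k0 ks mF cF SA).
have cA : #|A| = #|M| - k by rewrite /A cardsD cU setIC cFU cF.
have cB : #|B| = #|M| - k.
  by rewrite /B cardsD cW (_ : ~: U :&: VF = VF :\: U) ?cFW ?cF // setDE setIC.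
have fAB : f @: A = B.
  apply/eqP; rewrite eqEcard; apply/andP; split.
    by apply/subsetP => b /imsetP [a aA ->]; case: (fP a aA).
  by rewrite card_in_imset // cA cB.
set P := F :|: [set [set a; f a] | a in A].
have [sFE dF] := mF.
have VFP : forall e x, e \in F -> x \in e -> x \in VF.
  by move=> e x eF xe; apply/bigcupP; exists e.
have AU a : a \in A -> a \in U /\ a \notin VF by rewrite !inE => /andP[-> ->].
have fB a : a \in A -> f a \notin U /\ f a \notin VF.
  by move=> aA; case: (fP a aA); rewrite !inE => /andP[-> ->].
exists P; last exact: subsetUl.
split; first split.
- rewrite subUset sFE /=; apply/subsetP => e /imsetP [a aA ->].
  by case: (fP a aA).
- move=> e1 e2; rewrite !inE => /orP[e1F|/imsetP [a aA ->]] /orP[e2F|/imsetP [b bA ->]].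
  + exact: dF.
  + move=> _; apply/disjP => x xe; rewrite !inE => /orP[]/eqP ex.
      by have [_ /negP] := AU b bA; apply; rewrite -ex; exact: VFP xe.
    by have [_ /negP] := fB b bA; apply; rewrite -ex; exact: VFP xe.
  + move=> _; apply/disjP => x; rewrite !inE => /orP[]/eqP ex xe.
      by have [_ /negP] := AU a aA; apply; rewrite -ex; exact: VFP xe.
    by have [_ /negP] := fB a aA; apply; rewrite -ex; exact: VFP xe.
  + move=> ne; apply/disjP => x; rewrite !inE => /orP[]/eqP -> /orP[]/eqP e.
    * by move/eqP: ne; apply; rewrite e.
    * by case: (AU a aA) => aU _; case: (fB b bA) => fbU _; move: fbU; rewrite -e aU.
    * by case: (AU b bA) => bU _; case: (fB a aA) => faU _; move: faU; rewrite e bU.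
    * by move/eqP: ne; apply; rewrite (finj _ _ aA bA e).
- move=> x; case: (boolP (x \in VF)) => [/bigcupP [e eF xe]|xV].
    by exists e; rewrite // inE eF.
  case: (boolP (x \in U)) => xU.
    have xA : x \in A by rewrite inE xU xV.
    by exists [set x; f x]; rewrite ?inE ?eqxx // (imset_f _ xA) orbT.
  have : x \in B by rewrite !inE xU xV.
  rewrite -fAB => /imsetP [a aA ->].
  by exists [set a; f a]; rewrite ?inE ?eqxx ?orbT // (imset_f _ aA) orbT.
Qed.


Lemma medge_W_inj T E U M u v : @setting T E U M -> u \notin U -> v \notin U ->
  medge M u = medge M v -> u = v.
Proof.
move=> st uU vU euv; have pmM := set_pm st; have [eM ue] := medgeP u pmM.
have [_ ve] := medgeP v pmM; have [sE bE _] := st.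
apply: (uniqW sE bE (subsetP (set_sub st) _ eM)) => //; by rewrite euv.
Qed.

Lemma setting_del T E U M u w : @setting T E U M -> medge M u != medge M w ->
  @setting T (E :\ [set u; w]) U M.
Proof.
move=> st ne; have [sE bE [[sME dM] cM]] := st.
have nM := edge_notin st ne.
split.
- by move=> e; rewrite inE => /andP[_ /sE].
- by move=> e; rewrite inE => /andP[_ /bE].
- split => //; split => //; apply/subsetP => e eM; rewrite !inE (subsetP sME) // andbT.
  by apply/eqP => ee; move: nM; rewrite -ee eM.
Qed.

Lemma arcs_del T E U M e1 e2 u w : @setting T E U M ->
  u \in U -> w \notin U -> [set u; w] \in E -> medge M u = e1 -> medge M w = e2 -> e1 != e2 ->
  DGM_arcs (E :\ [set u; w]) U M = DGM_arcs E U M :\ (e1, e2).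
Proof.
move=> st uU wU uwE mu mw ne.
have ne' : medge M u != medge M w by rewrite mu mw.
have st' := setting_del st ne'.
apply/setP => [[p1 p2]]; rewrite in_setD1; apply/idP/idP.
- move=> h; have [u' [w' [[u'U w'U e'E m1 m2] [ne2 _ _]]]] := arc_to_edge st' h.
  rewrite in_setD1 in e'E; case/andP: e'E => ne0 e'E.
  rewrite -m1 -m2 (arc_of_edge st u'U w'U e'E) ?andbT; last by rewrite m1 m2.
  apply/negP => /eqP [h1 h2]; move/negP: ne0; apply.
  have -> : u' = u by apply: (medge_U_inj st) => //; rewrite h1 mu.
  have -> : w' = w by apply: (medge_W_inj st) => //; rewrite h2 mw.
  by [].
- case/andP => npa h.
  have [u' [w' [[u'U w'U e'E m1 m2] [ne2 _ _]]]] := arc_to_edge st h.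
  rewrite -m1 -m2; apply: (arc_of_edge st') => //; last by rewrite m1 m2.
  rewrite in_setD1 e'E andbT; apply/eqP => ee.
  have : u' \in [set u; w] by rewrite -ee !inE eqxx.
  rewrite !inE => /orP[]/eqP eu; last by move: u'U; rewrite eu (negbTE wU).
  have : w' \in [set u; w] by rewrite -ee !inE eqxx orbT.
  rewrite !inE => /orP[]/eqP ew; first by move: w'U; rewrite ew uU.
  by move/eqP: npa; apply; rewrite -m1 -m2 eu ew mu mw.
Qed.

Unset Implicit Arguments.

Theorem theorem5 (T : finType) (E : {set {set T}}) (U : {set T})
    (M : {set {set T}}) (k : nat) :
  simple_graph E ->
  bipartite_with E U ->
  perfect_matching E M ->
  0 < k ->
  minimal_k_extendable E k ->
  minimal_k_strong M (DGM_arcs E U M) k.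
Proof.
move=> sE bE pM k0 [kE kmin].
have st : setting E U M by split.
split; first exact: dir1 st k0 kE.
move=> [e1 e2] aA kst.
have [u [w [[uU wU uwE mu mw] [ne _ _]]]] := arc_to_edge st aA.
have ne' : medge M u != medge M w by rewrite mu mw.
have st' := setting_del st ne'.
apply: (kmin _ uwE); apply: (dir2 st' k0).
by rewrite (arcs_del st uU wU uwE mu mw ne).
Qed.
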